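(* Let $E:[0,\infty)\times\mathbb{R}^2\to\mathbb{R}^2$ and $b:[0,\infty)\times\mathbb{R}^2\to\mathbb{R}$ be continuous with $b$ nowhere vanishing, $B=b\,e_3$. Fix $\Delta t>0$, $T>0$, $t^n=n\Delta t$, $N_T=\lfloor T/\Delta t\rfloor$. For each $\varepsilon>0$ let $(x^n_\varepsilon,v^n_\varepsilon)_{0\le n\le N_T}$ be generated (dropping the index $\varepsilon$ inside stages) by: given $(x^n,v^n)$, find $(x^{(1)},v^{(1)})$ and $(x^{(2)},v^{(2)})$ with $$x^{(1)}=x^n+\frac{\Delta t}{2\varepsilon}v^{(1)},\qquad v^{(1)}=v^n+\frac{\Delta t}{2\varepsilon}\Big[\frac{v^{(1)}}{\varepsilon}\wedge B(t^n,x^n)+E(t^n,x^n)\Big],$$ $$x^{(2)}=x^n+\frac{\Delta t}{2\varepsilon}v^{(2)},\qquad v^{(2)}=v^n+\frac{\Delta t}{2\varepsilon}\Big[\frac{v^{(2)}}{\varepsilon}\wedge B(t^{n+1},2x^{(1)}-x^n)+E(t^{n+1},2x^{(1)}-x^n)\Big],$$ and set $x^{n+1}=x^{(1)}+x^{(2)}-x^n$, $v^{n+1}=v^{(1)}+v^{(2)}-v^n$. Assume that for every $1\le n\le N_T$ the family $(x^n_\varepsilon,\varepsilon v^n_\varepsilon)_{\varepsilon>0}$ is bounded uniformly in $\varepsilon$ and that $(x^0_\varepsilon,\varepsilon v^0_\varepsilon)\to(y^0,0)$ as $\varepsilon\to0$. Then for every $0\le n\le N_T$, $x^n_\varepsilon\to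 y^n$ as $\varepsilon\to0$, where $(y^n)$ starts from $y^0$ and satisfies $$y^{(1)}=y^n+\frac{\Delta t}{2}U(t^n,y^n),\qquad y^{(2)}=y^n+\frac{\Delta t}{2}U(t^{n+1},2y^{(1)}-y^n),\qquad y^{n+1}=y^{(1)}+y^{(2)}-y^n.$$
   Context: Vectors of $\mathbb{R}^2$ are identified with vectors $(w_1,w_2,0)$ of $\mathbb{R}^3$, $e_3=(0,0,1)$, and $\wedge$ is the cross product; thus for $w\in\mathbb{R}^2$ and $B=b\,e_3$, $w\wedge B=b\,(w_2,-w_1)\in\mathbb{R}^2$. The guiding-center drift is $U(t,x)=\dfrac{E(t,x)\wedge B(t,x)}{\|B(t,x)\|^2}$. *)

(* Defs.v *)
From Stdlib Require Import Reals Lra ZArith.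
Open Scope R_scope.

Definition R2 := (R * R)%type.
Definition vadd (u w : R2) : R2 := (fst u + fst w, snd u + snd w).
Definition vsub (u w : R2) : R2 := (fst u - fst w, snd u - snd w).
Definition vscal (c : R) (u : R2) : R2 := (c * fst u, c * snd u).
Definition vnorm (u : R2) : R := sqrt (fst u ^ 2 + snd u ^ 2).
Definition vdist (u w : R2) : R := vnorm (vsub u w).

(* w /\ (b e3) = b (w2, -w1) *)
Definition wedgeB (w : R2) (b : R) : R2 := (b * snd w, - (b * fst w)).

(* Guiding-center drift U = (E /\ B) / |B|^2, with B = b e3. *)
Definition drift (E : R -> R2 -> R2) (b : R -> R2 -> R) (t : R) (x : R2) : R2 :=
  vscal (/ (b t x ^ 2)) (wedgeB (E t x) (b t x)).

Definition cont_half_R2 (f : R -> R2 -> R2) : Prop :=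
  forall t x, 0 <= t -> forall eta, 0 < eta -> exists delta, 0 < delta /\
    forall s z, 0 <= s -> Rabs (s - t) < delta -> vdist z x < delta ->
      vdist (f s z) (f t x) < eta.
Definition cont_half_R (f : R -> R2 -> R) : Prop :=
  forall t x, 0 <= t -> forall eta, 0 < eta -> exists delta, 0 < delta /\
    forall s z, 0 <= s -> Rabs (s - t) < delta -> vdist z x < delta ->
      Rabs (f s z - f t x) < eta.

Definition lim_eps0 (f : R -> R2) (l : R2) : Prop :=
  forall eta, 0 < eta -> exists delta, 0 < delta /\
    forall eps, 0 < eps < delta -> vdist (f eps) l < eta.

(* N_T = floor (T / dt)  (Int_part is the floor in Stdlib) *)
Definition NT (T dt : R) : nat := Z.to_nat (Int_part (T / dt)).

Definition tgrid (dt : R) (n : nat) : R := INR n * dt.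

Definition scheme_step (E : R -> R2 -> R2) (b : R -> R2 -> R) (dt eps : R)
  (n : nat) (xn vn xn1 vn1 : R2) : Prop :=
  exists x1 v1 x2 v2 : R2,
    let c := dt / (2 * eps) in
    x1 = vadd xn (vscal c v1) /\
    v1 = vadd vn (vscal c (vadd (wedgeB (vscal (/ eps) v1) (b (tgrid dt n) xn))
                                 (E (tgrid dt n) xn))) /\
    x2 = vadd xn (vscal c v2) /\
    v2 = vadd vn (vscal c (vadd
            (wedgeB (vscal (/ eps) v2)
                    (b (tgrid dt (S n)) (vsub (vscal 2 x1) xn)))
            (E (tgrid dt (S n)) (vsub (vscal 2 x1) xn)))) /\
    xn1 = vsub (vadd x1 x2) xn /\
    vn1 = vsub (vadd v1 v2) vn.

Definition limit_step (E : R -> R2 -> R2) (b : R -> R2 -> R) (dt : R)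
  (n : nat) (yn yn1 : R2) : Prop :=
  let y1 := vadd yn (vscal (dt / 2) (drift E b (tgrid dt n) yn)) in
  let y2 := vadd yn (vscal (dt / 2)
              (drift E b (tgrid dt (S n)) (vsub (vscal 2 y1) yn))) in
  yn1 = vsub (vadd y1 y2) yn.

(* Main.v *)
Require Import Defs.
From Stdlib Require Import Reals Lra ClassicalEpsilon.
Open Scope R_scope.

Definition L (g : R -> R) (l : R) := limit1_in g (fun e => 0 < e) l 0.

Lemma vdist_fst u w : Rabs (fst u - fst w) <= vdist u w.
Proof.
  unfold vdist, vnorm, vsub; simpl. rewrite <- sqrt_Rsqr_abs.
  apply sqrt_le_1_alt. pose proof (Rle_0_sqr (fst u - fst w)); pose proof (Rle_0_sqr (snd u - snd w)); unfold Rsqr in *. nra.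
Qed.
Lemma vdist_snd u w : Rabs (snd u - snd w) <= vdist u w.
Proof.
  unfold vdist, vnorm, vsub; simpl. rewrite <- sqrt_Rsqr_abs.
  apply sqrt_le_1_alt. pose proof (Rle_0_sqr (fst u - fst w)); pose proof (Rle_0_sqr (snd u - snd w)); unfold Rsqr in *. nra.
Qed.
Lemma vdist_le u w : vdist u w <= Rabs (fst u - fst w) + Rabs (snd u - snd w).
Proof.
  unfold vdist, vnorm, vsub; simpl.
  set (a := fst u - fst w). set (c := snd u - snd w).
  pose proof (Rabs_pos a). pose proof (Rabs_pos c).
  rewrite <- (sqrt_Rsqr (Rabs a + Rabs c)) by lra.
  apply sqrt_le_1_alt. unfold Rsqr.
  assert (a * a = Rabs a * Rabs a) by (rewrite <- Rabs_mult; symmetry; apply Rabs_pos_eq; nra).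
  assert (c * c = Rabs c * Rabs c) by (rewrite <- Rabs_mult; symmetry; apply Rabs_pos_eq; nra).
  nra.
Qed.

Lemma vlim_split f l : lim_eps0 f l <->
  L (fun e => fst (f e)) (fst l) /\ L (fun e => snd (f e)) (snd l).
Proof.
  unfold lim_eps0, L, limit1_in, limit_in; simpl; unfold Rdist. split.
  - intros H; split; intros eta Heta; destruct (H eta Heta) as [d [Hd H']];
    exists d; split; try lra; intros x [Hx Hxd];
    rewrite Rminus_0_r, Rabs_pos_eq in Hxd by lra.
    + eapply Rle_lt_trans; [apply vdist_fst | apply H'; lra].
    + eapply Rle_lt_trans; [apply vdist_snd | apply H'; lra].
  - intros [H1 H2] eta Heta.
    destruct (H1 (eta/2)) as [d1 [Hd1 H1']]; [lra|].
    destruct (H2 (eta/2)) as [d2 [Hd2 H2']]; [lra|].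
    exists (Rmin d1 d2). split. { apply Rmin_pos; lra. }
    intros e He. eapply Rle_lt_trans; [apply vdist_le|].
    assert (Rabs (e - 0) < d1 /\ Rabs (e-0) < d2).
    { rewrite Rminus_0_r, Rabs_pos_eq by lra.
      pose proof (Rmin_l d1 d2); pose proof (Rmin_r d1 d2). lra. }
    specialize (H1' e ltac:(lra)). specialize (H2' e ltac:(lra)). lra.
Qed.

Lemma Lval g l l' : L g l -> l = l' -> L g l'.
Proof. intros H ->; exact H. Qed.
Lemma Lconst a : L (fun _ => a) a.
Proof. exact (limit_free (fun _ => a) _ 0 0). Qed.
Lemma Lid : L (fun e => e) 0.
Proof. apply lim_x. Qed.
Lemma Lext g h l : (forall e, 0 < e -> g e = h e) -> L h l -> L g l.
Proof. intros H; apply limit1_ext; intros; symmetry; auto. Qed.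

Lemma cont_lim2 (E : R -> R2 -> R2) (HE : cont_half_R2 E) t (Ht : 0 <= t) f x :
  lim_eps0 f x -> lim_eps0 (fun e => E t (f e)) (E t x).
Proof.
  intros Hf eta Heta. destruct (HE t x Ht eta Heta) as [d [Hd H]].
  destruct (Hf d Hd) as [d' [Hd' H']]. exists d'; split; auto.
  intros e He. apply H; auto. replace (t - t) with 0 by ring. rewrite Rabs_R0; lra.
Qed.

Lemma cont_lim1 (b : R -> R2 -> R) (Hb : cont_half_R b) t (Ht : 0 <= t) f x :
  lim_eps0 f x -> L (fun e => b t (f e)) (b t x).
Proof.
  intros Hf eta Heta. destruct (Hb t x Ht eta Heta) as [d [Hd H]].
  destruct (Hf d Hd) as [d' [Hd' H']]. exists d'; split; auto.
  intros e [He Hed]. simpl in *. unfold Rdist in *.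
  rewrite Rminus_0_r, Rabs_pos_eq in Hed by lra.
  apply H; auto. replace (t - t) with 0 by ring. rewrite Rabs_R0; lra.
Qed.

Definition Dn dt e be := e*e*e*e + (dt*be/2)*(dt*be/2).
Definition N1 dt e be u1 u2 e1 e2 :=
  dt/2*u1*(e*e) + (dt/2)*(dt/2)*e1*(e*e) + dt*dt*be*u2/4 + dt*dt*dt*be*e2/8.

Lemma cross x y z w : y <> 0 -> w <> 0 -> x*w = z*y -> x/y = z/w.
Proof. intros Hy Hw H. field_simplify_eq; auto. lra. Qed.

Lemma core dt e (He : 0 < e) (Hdt : 0 < dt) be (Hbe : be <> 0) q1 q2 e1 e2 v1 v2 :
  v1 = q1 + dt/(2*e)*(be*(/e*v2) + e1) ->
  v2 = q2 + dt/(2*e)*(-(be*(/e*v1)) + e2) ->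
  dt/(2*e)*v1 = N1 dt e be (e*q1) (e*q2) e1 e2 / Dn dt e be /\
  dt/(2*e)*v2 = N1 dt e be (e*q2) (-(e*q1)) e2 (-e1) / Dn dt e be.
Proof.
  intros H1 H2.
  set (c := dt/(2*e)). set (k := c*be/e).
  assert (Hx : v1 - (q1 + c*e1) - k*v2 = 0).
  { rewrite H1. unfold k, c. field. lra. }
  assert (Hy : v2 - (q2 + c*e2) + k*v1 = 0).
  { rewrite H2. unfold k, c. field. lra. }
  assert (Hk : 0 < 1 + k*k) by nra.
  assert (HD : 0 < Dn dt e be).
  { unfold Dn. assert (0 < dt*be/2 * (dt*be/2)).
    { assert (dt*be/2 <> 0) by (intro; apply Hbe; nra). nra. }
    assert (0 <= e*e) by nra. nra. }
  assert (Hv1 : v1 = (q1 + c*e1 + k*(q2 + c*e2)) / (1 + k*k)).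
  { apply (Rmult_eq_reg_r (1 + k*k)); [|lra]. unfold Rdiv.
    rewrite Rmult_assoc, Rinv_l by lra. rewrite Rmult_1_r.
    transitivity ((v1 - (q1 + c*e1) - k*v2) + k*(v2 - (q2 + c*e2) + k*v1)
       + (q1 + c*e1 + k*(q2 + c*e2))); [ring|]. rewrite Hx, Hy. ring. }
  assert (Hv2 : v2 = (q2 + c*e2 - k*(q1 + c*e1)) / (1 + k*k)).
  { apply (Rmult_eq_reg_r (1 + k*k)); [|lra]. unfold Rdiv.
    rewrite Rmult_assoc, Rinv_l by lra. rewrite Rmult_1_r.
    transitivity ((v2 - (q2 + c*e2) + k*v1) - k*(v1 - (q1 + c*e1) - k*v2)
       + (q2 + c*e2 - k*(q1 + c*e1))); [ring|]. rewrite Hx, Hy. ring. }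
  assert (Hkn : 1 + k*k <> 0) by lra. assert (HDn : Dn dt e be <> 0) by lra.
  split.
  - rewrite Hv1. replace (c * ((q1 + c*e1 + k*(q2 + c*e2)) / (1 + k*k)))
      with ((c*(q1 + c*e1 + k*(q2 + c*e2))) / (1 + k*k)) by (unfold Rdiv; ring).
    apply cross; auto. unfold k, c, N1, Dn. field. lra.
  - rewrite Hv2. replace (c * ((q2 + c*e2 - k*(q1 + c*e1)) / (1 + k*k)))
      with ((c*(q2 + c*e2 - k*(q1 + c*e1))) / (1 + k*k)) by (unfold Rdiv; ring).
    apply cross; auto. unfold k, c, N1, Dn. field. lra.
Qed.

Lemma Ldiv f g a c : L f a -> L g c -> c <> 0 -> L (fun e => f e / g e) (a / c).
Proof. intros Hf Hg Hc. unfold Rdiv. apply limit_mul; auto. apply limit_inv; auto. Qed.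

Ltac lim := repeat (first [ eassumption | apply Lconst | apply Lid | apply Ldiv
  | apply limit_plus | apply limit_minus | apply limit_mul | apply limit_Ropp ]).

Lemma stage (E : R -> R2 -> R2) (b : R -> R2 -> R)
  (HE : cont_half_R2 E) (Hb : cont_half_R b)
  (Hbnz : forall t x, 0 <= t -> b t x <> 0) dt (Hdt : 0 < dt) t (Ht : 0 <= t)
  (p q z xs vs : R -> R2) p0 z0 :
  lim_eps0 p p0 -> lim_eps0 (fun e => vscal e (q e)) (0,0) -> lim_eps0 z z0 ->
  (forall e, 0 < e -> xs e = vadd (p e) (vscal (dt/(2*e)) (vs e)) /\
     vs e = vadd (q e) (vscal (dt/(2*e)) (vadd (wedgeB (vscal (/e) (vs e)) (b t (z e)))
              (E t (z e))))) ->
  lim_eps0 xs (vadd p0 (vscal (dt/2) (drift E b t z0))) /\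
  lim_eps0 (fun e => vscal e (vs e)) (0,0).
Proof.
  intros Hp Hq Hz Heq.
  pose proof (cont_lim2 E HE t Ht z z0 Hz) as HEz.
  pose proof (cont_lim1 b Hb t Ht z z0 Hz) as Hbz.
  apply vlim_split in Hp, Hq, HEz. destruct Hp as [Hp1 Hp2]. destruct Hq as [Hq1 Hq2].
  destruct HEz as [HE1 HE2]. simpl in Hq1, Hq2.
  assert (Hb0 := Hbnz t z0 Ht).
  assert (Hc : forall e, 0 < e ->
    dt/(2*e) * fst (vs e) = N1 dt e (b t (z e)) (e*fst (q e)) (e*snd (q e))
        (fst (E t (z e))) (snd (E t (z e))) / Dn dt e (b t (z e)) /\
    dt/(2*e) * snd (vs e) = N1 dt e (b t (z e)) (e*snd (q e)) (-(e*fst (q e)))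
        (snd (E t (z e))) (-fst (E t (z e))) / Dn dt e (b t (z e))).
  { intros e He. destruct (Heq e He) as [_ Hv].
    pose proof (f_equal fst Hv) as H1. pose proof (f_equal snd Hv) as H2.
    simpl in H1, H2. apply core; auto. }
  assert (HD0 : Dn dt 0 (b t z0) <> 0).
  { unfold Dn. assert (dt * b t z0 / 2 <> 0) by (intro; apply Hb0; nra). nra. }
  split; apply vlim_split; split.
  - apply Lext with (h := fun e => fst (p e) + N1 dt e (b t (z e)) (e*fst (q e)) (e*snd (q e))
        (fst (E t (z e))) (snd (E t (z e))) / Dn dt e (b t (z e))).
    { intros e He. rewrite (proj1 (Heq e He)). simpl. rewrite (proj1 (Hc e He)). reflexivity. }
    unfold N1, Dn. eapply Lval. { lim. all: first [exact HD0 | (apply Rgt_not_eq; lra)]. }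
    unfold drift, wedgeB, vscal, vadd. simpl. field. split; auto; lra.
  - apply Lext with (h := fun e => snd (p e) + N1 dt e (b t (z e)) (e*snd (q e)) (-(e*fst (q e)))
        (snd (E t (z e))) (-fst (E t (z e))) / Dn dt e (b t (z e))).
    { intros e He. rewrite (proj1 (Heq e He)). simpl. rewrite (proj2 (Hc e He)). reflexivity. }
    unfold N1, Dn. eapply Lval. { lim. all: first [exact HD0 | (apply Rgt_not_eq; lra)]. }
    unfold drift, wedgeB, vscal, vadd. simpl. field. split; auto; lra.
  - apply Lext with (h := fun e => 2/dt * (e * e) * (N1 dt e (b t (z e)) (e*fst (q e)) (e*snd (q e))
        (fst (E t (z e))) (snd (E t (z e))) / Dn dt e (b t (z e)))).
    { intros e He. simpl. rewrite <- (proj1 (Hc e He)). field. lra. }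
    unfold N1, Dn. eapply Lval. { lim. all: first [exact HD0 | (apply Rgt_not_eq; lra)]. }
    simpl. field. split; auto; lra.
  - apply Lext with (h := fun e => 2/dt * (e * e) * (N1 dt e (b t (z e)) (e*snd (q e)) (-(e*fst (q e)))
        (snd (E t (z e))) (-fst (E t (z e))) / Dn dt e (b t (z e)))).
    { intros e He. simpl. rewrite <- (proj2 (Hc e He)). field. lra. }
    unfold N1, Dn. eapply Lval. { lim. all: first [exact HD0 | (apply Rgt_not_eq; lra)]. }
    simpl. field. split; auto; lra.
Qed.

Lemma vlim_add f g a c : lim_eps0 f a -> lim_eps0 g c -> lim_eps0 (fun e => vadd (f e) (g e)) (vadd a c).
Proof. rewrite !vlim_split. intros [H1 H2] [H3 H4]; split; simpl; apply limit_plus; auto. Qed.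
Lemma vlim_sub f g a c : lim_eps0 f a -> lim_eps0 g c -> lim_eps0 (fun e => vsub (f e) (g e)) (vsub a c).
Proof. rewrite !vlim_split. intros [H1 H2] [H3 H4]; split; simpl; apply limit_minus; auto. Qed.
Lemma vlim_scal k f a : lim_eps0 f a -> lim_eps0 (fun e => vscal k (f e)) (vscal k a).
Proof. rewrite !vlim_split. intros [H1 H2]; split; simpl; apply limit_mul; auto; apply Lconst. Qed.
Lemma vlim_ext f g a : (forall e, 0 < e -> f e = g e) -> lim_eps0 g a -> lim_eps0 f a.
Proof. intros H Hg eta Heta. destruct (Hg eta Heta) as [d [Hd H']]. exists d; split; auto.
  intros e He. rewrite H by lra. auto. Qed.
Lemma vlim_val f a c : lim_eps0 f a -> a = c -> lim_eps0 f c.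
Proof. intros H ->; exact H. Qed.

Theorem proposition3p2
  (E : R -> R2 -> R2) (b : R -> R2 -> R)
  (HE : cont_half_R2 E) (Hb : cont_half_R b)
  (Hbnz : forall t x, 0 <= t -> b t x <> 0)
  (dt T : R) (Hdt : 0 < dt) (HT : 0 < T)
  (X V : R -> nat -> R2)
  (Hscheme : forall eps, 0 < eps -> forall n, (n < NT T dt)%nat ->
      scheme_step E b dt eps n (X eps n) (V eps n) (X eps (S n)) (V eps (S n)))
  (Hbound : forall n, (1 <= n <= NT T dt)%nat -> exists M, forall eps, 0 < eps ->
      vnorm (X eps n) <= M /\ vnorm (vscal eps (V eps n)) <= M)
  (y : nat -> R2)
  (Hx0 : lim_eps0 (fun eps => X eps 0%nat) (y 0%nat))
  (Hv0 : lim_eps0 (fun eps => vscal eps (V eps 0%nat)) (0, 0))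
  (Hy : forall n, (n < NT T dt)%nat -> limit_step E b dt n (y n) (y (S n))) :
  forall n, (n <= NT T dt)%nat -> lim_eps0 (fun eps => X eps n) (y n).
Proof.
  assert (Main : forall n, (n <= NT T dt)%nat -> lim_eps0 (fun eps => X eps n) (y n) /\
            lim_eps0 (fun eps => vscal eps (V eps n)) (0, 0)).
  2: { intros n Hn; exact (proj1 (Main n Hn)). }
  induction n as [|n IH]; intros Hn. { split; auto. }
  assert (Hlt : (n < NT T dt)%nat) by exact Hn.
  destruct (IH (PeanoNat.Nat.lt_le_incl _ _ Hlt)) as [IHx IHv].
  set (P := fun e (w : R2 * R2 * R2 * R2) => 0 < e ->
    let x1 := fst (fst (fst w)) in let v1 := snd (fst (fst w)) in
    let x2 := snd (fst w) in let v2 := snd w in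
    let c := dt / (2 * e) in
    x1 = vadd (X e n) (vscal c v1) /\
    v1 = vadd (V e n) (vscal c (vadd (wedgeB (vscal (/ e) v1) (b (tgrid dt n) (X e n)))
                                 (E (tgrid dt n) (X e n)))) /\
    x2 = vadd (X e n) (vscal c v2) /\
    v2 = vadd (V e n) (vscal c (vadd
            (wedgeB (vscal (/ e) v2)
                    (b (tgrid dt (S n)) (vsub (vscal 2 x1) (X e n))))
            (E (tgrid dt (S n)) (vsub (vscal 2 x1) (X e n))))) /\
    X e (S n) = vsub (vadd x1 x2) (X e n) /\
    V e (S n) = vsub (vadd v1 v2) (V e n)).
  assert (Hex : forall e, exists w, P e w).
  { intros e. destruct (Rlt_dec 0 e) as [He|He].
    - destruct (Hscheme e He n Hlt) as [x1 [v1 [x2 [v2 H]]]].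
      exists (x1, v1, x2, v2). intros _. exact H.
    - exists ((0,0),(0,0),(0,0),(0,0)). intros H; lra. }
  set (w := fun e => proj1_sig (constructive_indefinite_description _ (Hex e))).
  assert (Hw : forall e, 0 < e -> P e (w e)).
  { intros e He. unfold w. destruct (constructive_indefinite_description _ (Hex e)) as [ww Hww]. exact Hww. }
  assert (Htn : forall k, 0 <= tgrid dt k).
  { intros k. unfold tgrid. pose proof (pos_INR k). nra. }
  destruct (stage E b HE Hb Hbnz dt Hdt (tgrid dt n) (Htn n)
     (fun e => X e n) (fun e => V e n) (fun e => X e n)
     (fun e => fst (fst (fst (w e)))) (fun e => snd (fst (fst (w e)))) (y n) (y n)
     IHx IHv IHx) as [H1x H1v].
  { intros e He. destruct (Hw e He He) as [A [B' _]]. split; assumption. }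
  set (y1 := vadd (y n) (vscal (dt / 2) (drift E b (tgrid dt n) (y n)))) in *.
  assert (Hz : lim_eps0 (fun e => vsub (vscal 2 (fst (fst (fst (w e))))) (X e n))
             (vsub (vscal 2 y1) (y n))).
  { apply vlim_sub; auto. apply vlim_scal; auto. }
  destruct (stage E b HE Hb Hbnz dt Hdt (tgrid dt (S n)) (Htn (S n))
     (fun e => X e n) (fun e => V e n) _
     (fun e => snd (fst (w e))) (fun e => snd (w e)) (y n) _
     IHx IHv Hz) as [H2x H2v].
  { intros e He. destruct (Hw e He He) as [_ [_ [A [B' _]]]]. split; assumption. }
  split.
  - eapply vlim_ext.
    { intros e He. destruct (Hw e He He) as [_ [_ [_ [_ [A _]]]]]. exact A. }
    eapply vlim_val. { apply vlim_sub; [apply vlim_add; [exact H1x | exact H2x] | exact IHx]. }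
    specialize (Hy n Hlt). unfold limit_step in Hy. cbv zeta in Hy. rewrite Hy. reflexivity.
  - eapply vlim_ext.
    { intros e He. destruct (Hw e He He) as [_ [_ [_ [_ [_ A]]]]]. rewrite A. reflexivity. }
    eapply vlim_val.
    { eapply vlim_ext with (g := fun e => vsub (vadd (vscal e (snd (fst (fst (w e)))))
          (vscal e (snd (w e)))) (vscal e (V e n))).
      { intros e _. unfold vsub, vadd, vscal; simpl. f_equal; ring. }
      apply vlim_sub; [apply vlim_add | ]. all: eassumption. }
    unfold vsub, vadd; simpl. f_equal; ring.
Qed.
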